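(* Let $\mathcal{X}$ be a finite set of actions, $\mathcal{Y}$ a finite set of responses, $\mathcal{H}\subseteq\mathcal{Y}^{\mathcal{X}}$, $\mathrm{cost}:\mathcal{X}\times\mathcal{Y}\to\mathbb{R}_+$, $Q>0$, and let $f:2^{\mathcal{X}\times\mathcal{Y}}\to\mathbb{R}_+$ be a learning objective for $\mathcal{H}$. If there exists an optimal algorithm for $f$ (and $Q$, $\mathcal{H}$), then there exists a bifurcating optimal algorithm for $f,\mathcal{H}$.
   Context: The true state is an unknown $h^*\in\mathcal{H}$. An interactive algorithm $\mathcal{A}$, given the set $S\subseteq\mathcal{X}\times\mathcal{Y}$ of pairs observed so far, outputs either an action $\mathcal{A}(S)\in\mathcal{X}$ (yielding the pair $(x,h^*(x))$, which is added to $S$) or terminates. $S^h_t[\mathcal{A}]$ is the set of pairs collected in the first $t$ iterations and $S^h[\mathcal{A}]$ the set collected until termination, when $h^*=h$. $\mathrm{cost}(S)=\sum_{(x,y)\in S}\mathrm{cost}(x,y)$, $\mathrm{cost}(\mathcal{A})=\max_{h\in\mathcal{H}}\mathrm{cost}(S^h[\mathcal{A}])$. An optimal algorithm is an interactive algorithm with $f(S^h[\mathcal{A}])\ge Q$ for all $h\in\mathcal{H}$ whose cost $\mathrm{cost}(\mathcal{A})$ equals the minimum of $\mathrm{cost}$ over all such algorithms. Version space $V(S)=\{h\in\mathcal{H}\mid \forall(x,y)\in S,\ y=h(x)\}$. $f$ is a learning objective for $\mathcal{H}$ if $f(S)=g(V(S))$ for some monotone non-increasing $g$. Let $\mathcal{Y}(x,S):=\{h(x)\mid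 h\in V(S)\}$. $\mathcal{A}$ is bifurcating for $\mathcal{H}$ if for all $t$ and $h\in\mathcal{H}$ (at which $\mathcal{A}$ selects an action), $|\mathcal{Y}(\mathcal{A}(S^h_t[\mathcal{A}]),S^h_t[\mathcal{A}])|\ge 2$. *)

(* Defs.v *)
From mathcomp Require Import all_boot all_order all_algebra.
Set Implicit Arguments. Unset Strict Implicit. Unset Printing Implicit Defensive.
Import Order.TTheory GRing.Theory Num.Theory.
Local Open Scope ring_scope.

Section Interactive.
Variables (X Y : finType) (R : realFieldType).

(* An interactive algorithm: given the set S of observed pairs, returns
   Some x (select action x) or None (terminate). *)
Definition algorithm := {set X * Y} -> option X.

Fixpoint run (A : algorithm) (h : {ffun X -> Y}) (t : nat) : {set X * Y} :=
  match t with
  | 0 => set0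
  | t'.+1 => let S := run A h t' in
             match A S with
             | Some x => (x, h x) |: S
             | None => S
             end
  end.

Definition final (A : algorithm) h (S : {set X * Y}) : Prop :=
  exists t, A (run A h t) = None /\ S = run A h t.

Definition terminates (H : {set {ffun X -> Y}}) (A : algorithm) : Prop :=
  forall h, h \in H -> exists t, A (run A h t) = None.

Definition costS (cost : X -> Y -> R) (S : {set X * Y}) : R :=
  \sum_(p in S) cost p.1 p.2.

Definition feasible (f : {set X * Y} -> R) (Q : R) (H : {set {ffun X -> Y}}) (A : algorithm) : Prop :=
  terminates H A /\ forall h S, h \in H -> final A h S -> Q <= f S.

(* cost(A) = max_{h in H} cost(S^h[A]) <= c *)
Definition cost_le (cost : X -> Y -> R) (H : {set {ffun X -> Y}}) (A : algorithm) (c : R) : Prop :=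
  forall h S, h \in H -> final A h S -> costS cost S <= c.

Definition optimal f Q (H : {set {ffun X -> Y}}) cost (A : algorithm) : Prop :=
  feasible f Q H A /\
  forall B, feasible f Q H B -> forall c, cost_le cost H B c -> cost_le cost H A c.

Definition vspace (H : {set {ffun X -> Y}}) (S : {set X * Y}) : {set {ffun X -> Y}} :=
  [set h in H | [forall p in S, p.2 == h p.1]].

Definition learning_objective (H : {set {ffun X -> Y}}) (f : {set X * Y} -> R) : Prop :=
  exists g : {set {ffun X -> Y}} -> R,
    (forall V1 V2 : {set {ffun X -> Y}}, V1 \subset V2 -> g V2 <= g V1) /\
    forall S, f S = g (vspace H S).

Definition resp (H : {set {ffun X -> Y}}) (x : X) (S : {set X * Y}) : {set Y} :=
  [set (h : {ffun X -> Y}) x | h in vspace H S].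

Definition bifurcating (H : {set {ffun X -> Y}}) (A : algorithm) : Prop :=
  forall t h x, h \in H -> A (run A h t) = Some x ->
    (2 <= #|resp H x (run A h t)|)%N.

End Interactive.

(* Main.v *)
Require Import Defs.
From mathcomp Require Import all_boot all_order all_algebra.
From Stdlib Require Import ClassicalEpsilon.
Import Order.TTheory GRing.Theory Num.Theory.
Local Open Scope ring_scope.

Set Implicit Arguments. Unset Strict Implicit.
Section Bif.
Variables (X Y : finType) (H : {set {ffun X -> Y}}) (A : algorithm X Y).

Definition stop h S t : bool :=
  if A (run A h t) is Some x then (1 < #|resp H x S|)%N else true.

Definition kh h S : nat :=
  match excluded_middle_informative (exists t, stop h S t) with
  | left p => ex_minn p | right _ => 0%N end.

Definition Bal : algorithm X Y := fun S =>
  if [pick h' in vspace H S] is Some h' then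
    (if A (run A h' (kh h' S)) is Some x then
       (if (1 < #|resp H x S|)%N then Some x else None) else None)
  else None.

Lemma in_vspace_U h x S : h \in vspace H S -> h \in vspace H ((x, h x) |: S).
Proof.
rewrite !inE => /andP[-> /forallP F]; apply/forallP => p.
apply/implyP; rewrite !inE => /orP[/eqP -> //|pS].
exact: (implyP (F p) pS).
Qed.

Lemma in_vspace_run (C : algorithm X Y) h t : h \in H -> h \in vspace H (run C h t).
Proof.
move=> hH; elim: t => [|t IH] /=.
  by rewrite inE hH; apply/forallP => p; rewrite inE.
by case: (C _) => // x; apply: in_vspace_U.
Qed.

Lemma vspace_sub (S1 S2 : {set X * Y}) : S1 \subset S2 -> vspace H S2 \subset vspace H S1.
Proof.
move=> sub; apply/subsetP => h; rewrite !inE => /andP[-> /forallP F].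
apply/forallP => p; apply/implyP => pS; exact: (implyP (F p) (subsetP sub p pS)).
Qed.

Lemma resp_eq h h' x S : h \in vspace H S -> h' \in vspace H S ->
  (#|resp H x S| <= 1)%N -> h x = h' x.
Proof.
move=> hV h'V /card_le1_eqP E.
have m1 : h x \in resp H x S by apply/imsetP; exists h.
have m2 : h' x \in resp H x S by apply/imsetP; exists h'.
by symmetry; apply: (E (h x) (h' x)); [exact m1|exact m2].
Qed.

Lemma agree h h' S t : h \in vspace H S -> h' \in vspace H S ->
  (forall s, (s < t)%N -> ~~ stop h S s) -> run A h t = run A h' t.
Proof.
move=> hV h'V; elim: t => [//|t IH] Hs /=.
rewrite -IH; last by move=> s st; apply: Hs; apply: ltnW.
have := Hs t (ltnSn t); rewrite /stop.
case: (A (run A h t)) => // x; rewrite -leqNgt => le1.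
by rewrite (resp_eq hV h'V le1).
Qed.

Lemma kh_spec h S : (exists t, stop h S t) ->
  stop h S (kh h S) /\ forall s, (s < kh h S)%N -> ~~ stop h S s.
Proof.
move=> ex; rewrite /kh; case: excluded_middle_informative => // p.
case: ex_minnP => m Pm Mm; split => // s sm; apply/negP => Ps.
by have := Mm s Ps; rewrite leqNgt sm.
Qed.

Hypothesis term : terminates H A.

Lemma stop_ex h S : h \in H -> exists t, stop h S t.
Proof. by move=> /term [t Ht]; exists t; rewrite /stop Ht. Qed.

Lemma stop_run_eq h h' S t : run A h t = run A h' t -> stop h S t = stop h' S t.
Proof. by rewrite /stop => ->. Qed.

Lemma kh_eq h h' S : h \in vspace H S -> h' \in vspace H S -> kh h' S = kh h S.
Proof.
move=> hV h'V.
have hH : h \in H by move: hV; rewrite inE => /andP[].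
have h'H : h' \in H by move: h'V; rewrite inE => /andP[].
have [S1 M1] := kh_spec (stop_ex S hH).
have [S2 M2] := kh_spec (stop_ex S h'H).
have E s : (s <= kh h S)%N -> stop h' S s = stop h S s.
  move=> sk; rewrite /stop.
  have -> // : run A h s = run A h' s.
  by apply: (agree hV h'V) => r rs; apply: M1; apply: leq_trans rs sk.
apply/eqP; rewrite eqn_leq; apply/andP; split.
  rewrite leqNgt; apply/negP => lt; have := M2 _ lt.
  by rewrite E // S1.
rewrite leqNgt; apply/negP => lt; have := M1 _ lt.
by rewrite -E ?S2 // ltnW.
Qed.

Lemma Bal_eq h S : h \in vspace H S -> Bal S = A (run A h (kh h S)).
Proof.
move=> hV.
have hH : h \in H by move: hV; rewrite inE => /andP[].
have [S1 M1] := kh_spec (stop_ex S hH).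
rewrite /Bal; case: pickP => [h' h'V|/(_ h)]; last by rewrite hV.
rewrite (kh_eq hV h'V) -(agree hV h'V M1).
by move: S1; rewrite /stop; case: (A _) => // x ->.
Qed.

Lemma run_mono (C : algorithm X Y) (h : {ffun X -> Y}) s t : (s <= t)%N -> run C h s \subset run C h t.
Proof.
elim: t => [|t IH]; first by rewrite leqn0 => /eqP ->.
rewrite leq_eqVlt => /orP[/eqP -> //|st].
apply: subset_trans (IH st) _ => /=; case: (C _) => // x; exact: subsetUr.
Qed.

Lemma inv h t : h \in H ->
  run Bal h t \subset run A h (kh h (run Bal h t)) /\
  (Bal (run Bal h t) = None \/ (t <= kh h (run Bal h t))%N).
Proof.
move=> hH; elim: t => [|t [IHs IHk]].
  by split; [apply/subsetP => p; rewrite inE | right].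
set S := run Bal h t.
have hV := in_vspace_run Bal t hH.
have [S1 M1] := kh_spec (stop_ex S hH).
have BE := Bal_eq hV.
rewrite /= -/S.
case EB: (Bal S) => [x|]; last by split => //; left.
set S' := (x, h x) |: S.
have hV' : h \in vspace H S' by apply: in_vspace_U.
have [S1' M1'] := kh_spec (stop_ex S' hH).
have EA : A (run A h (kh h S)) = Some x by rewrite -BE.
have Sx : (1 < #|resp H x S|)%N by move: S1; rewrite /stop EA.
have sub' : S \subset S' by apply: subsetUr.
have le1 y : (#|resp H y S| <= 1)%N -> (#|resp H y S'| <= 1)%N.
  move=> le; apply: leq_trans le; apply: subset_leq_card.
  by apply: imsetS; apply: vspace_sub.
have gt : (kh h S < kh h S')%N.
  rewrite ltnNge; apply/negP => le.
  move: le; rewrite leq_eqVlt => /orP[/eqP E|lt].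
    move: S1'; rewrite /stop E EA => g.
    have : (#|resp H x S'| <= 1)%N.
      apply/card_le1_eqP => a b /imsetP[h1 h1V ->] /imsetP[h2 h2V ->].
      move: h1V h2V; rewrite !inE => /andP[_ /forallP F1] /andP[_ /forallP F2].
      have P := setU11 (x, h x) S.
      by move: (implyP (F1 (x, h x)) P) (implyP (F2 (x, h x)) P) => /eqP <- /eqP <-.
    by rewrite leqNgt g.
  have := M1 _ lt; have := S1'; rewrite /stop.
  case: (A _) => // y g1; rewrite -leqNgt => l1.
  by move: (le1 y l1); rewrite leqNgt g1.
split.
  apply: subset_trans (run_mono A h gt) => /=.
  by rewrite EA; apply: setUS.
right; case: IHk => [|tk]; first by rewrite EB.
exact: leq_ltn_trans tk gt.
Qed.

Lemma Bal_term : terminates H Bal.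
Proof.
move=> h hH; have [T HT] := term hH.
exists T.+1; have [_ [//|lt]] := inv T.+1 hH.
have [S1 M1] := kh_spec (stop_ex (run Bal h T.+1) hH).
have := M1 _ (leq_trans (ltnSn T) lt).
by rewrite /stop HT.
Qed.

Lemma Bal_final h S0 : h \in H -> final Bal h S0 ->
  exists SA, final A h SA /\ S0 \subset SA /\ vspace H S0 \subset vspace H SA.
Proof.
move=> hH [t [Bt ->]].
have hV := in_vspace_run Bal t hH.
have [sub _] := inv t hH.
set S := run Bal h t in hV sub Bt *.
have [S1 M1] := kh_spec (stop_ex S hH).
exists (run A h (kh h S)); split; first by exists (kh h S); rewrite -Bal_eq.
split => //.
apply/subsetP => h'' h''V.
have : forall s, (s <= kh h S)%N -> h'' \in vspace H (run A h s); last by apply.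
elim => [|s IH] sk.
  by move: h''V; rewrite !inE => /andP[-> _]; apply/forallP => p; rewrite inE.
have := M1 _ sk; rewrite /= /stop.
case: (A _) => [y|//].
rewrite -leqNgt => le.
rewrite (resp_eq hV h''V le); apply: in_vspace_U; apply: IH; exact: ltnW.
Qed.

End Bif.

Lemma costS_sub (X Y : finType) (R : realFieldType) (cost : X -> Y -> R) (S T : {set X * Y}) :
  (forall x y, 0 <= cost x y) -> S \subset T -> costS cost S <= costS cost T.
Proof.
move=> c0 sub; rewrite /costS [X in _ <= X](big_setID S) /= (setIidPr sub) lerDl.
by apply: sumr_ge0 => p _.
Qed.

Unset Implicit Arguments. Set Strict Implicit.
Theorem lemma1 (X Y : finType) (R : realFieldType) (H : {set {ffun X -> Y}})
  (cost : X -> Y -> R) (Q : R) (f : {set X * Y} -> R) :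
  (forall x y, 0 <= cost x y) -> 0 < Q -> (forall S, 0 <= f S) ->
  learning_objective H f ->
  (exists A : algorithm X Y, optimal f Q H cost A) ->
  exists A : algorithm X Y, optimal f Q H cost A /\ bifurcating H A.
Proof.
move=> c0 _ _ [g [gmon fE]] [A [[term feasA] optA]].
exists (Bal H A); split; last first.
  move=> t h x hH; rewrite (Bal_eq term (in_vspace_run _ _ hH)) => EA.
  rewrite /Bal.
  have [S1 _] := kh_spec (@stop_ex _ _ H A term _ (run (Bal H A) h t) hH).
  by move: S1; rewrite /stop EA.
split.
  split; first exact: Bal_term.
  move=> h S hH fin; have [SA [finA [_ sV]]] := Bal_final term hH fin.
  apply: le_trans (feasA h SA hH finA) _; rewrite !fE; exact: gmon.
move=> C feasC c costC h S hH fin.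
have [SA [finA [sub _]]] := Bal_final term hH fin.
apply: le_trans (costS_sub c0 sub) _.
exact: (optA C feasC c costC h SA hH finA).
Qed.
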